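(* Let $G$ be a planar PCC graph, let $v$ be a vertex and let $\sigma$ be a face that appears in the multiset $F(v)$ with multiplicity $2$. Then $7\le|\sigma|\le 11$.
   Context: $G$ is a finite simple connected graph 2-cell embedded in the sphere. For a vertex $v$, $F(v)$ is the multiset of faces incident to $v$, one entry for each corner of $v$ (so a face touching $v$ at two corners appears twice). $|\sigma|$ is the length of the boundary walk of $\sigma$, and $K(v)=1-\frac{\deg(v)}{2}+\sum_{\sigma\in F(v)}\frac1{|\sigma|}$. A prism (resp. antiprism) of order $N$ is the planar graph with $2N$ vertices, two $N$-faces and $N$ quadrilaterals (resp. $2N$ triangles), each vertex incident to two quadrilaterals and one $N$-face (resp. three triangles and one $N$-face). A planar PCC graph is such a $G$ with $K(v)>0$, $\deg(v)\ge3$ for all $v$, not a prism or antiprism. *)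

(* Defs.v *)
(* Plane graphs are encoded as combinatorial maps (rotation
   systems): darts D, vertex map vert : D -> V, edge involution alpha,
   vertex rotation sigma; faces are the orbits of phi := sigma \o alpha. *)
From HB Require Import structures.
From mathcomp Require Import all_boot all_order all_algebra.
Set Implicit Arguments. Unset Strict Implicit. Unset Printing Implicit Defensive.
Import Order.TTheory GRing.Theory Num.Theory.

Section Maps.
Variables (D V : finType) (vert : D -> V) (alpha sigma : D -> D).

(* face successor: follow the dart d to its head, then turn to the next dart *)
Definition face_perm (d : D) : D := sigma (alpha d).

Definition madj : rel V :=
  fun u w => [exists d, (vert d == u) && (vert (alpha d) == w)].

(* G is a finite simple connected graph 2-cell embedded in the sphere *)
Definition simple_plane_map : Prop :=
      (forall v : V, exists d, vert d = v) /\
      (forall d, alpha (alpha d) = d) /\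
      injective sigma /\ (forall d, vert (sigma d) = vert d) /\
      (forall d d', vert d = vert d' -> fconnect sigma d d') /\
      (* simple: no loops, no multiple edges *)
      (forall d, vert (alpha d) != vert d) /\
      (forall d d', vert d = vert d' -> vert (alpha d) = vert (alpha d') -> d = d') /\
      (forall u w : V, connect madj u w) /\
      (* genus 0 (Euler's formula V - E + F = 2, with #|D| = 2E) *)
      (2 * #|V| + 2 * fcard face_perm D = #|D| + 4)%N.

Definition mdeg (v : V) : nat := #|[set d | vert d == v]|.

Definition face_len (d : D) : nat := order face_perm d.

(* multiplicity of the face of dart e in the multiset F(v):
   the number of corners of v lying on that face *)
Definition face_mult (v : V) (e : D) : nat :=
  #|[set d | (vert d == v) && fconnect face_perm e d]|.

Local Open Scope ring_scope.
Definition curvature (v : V) : rat :=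
  1 - (mdeg v)%:R / 2%:R + \sum_(d | vert d == v) ((face_len d)%:R)^-1.

End Maps.

(* the prism graph of order N: C_N x K_2 on 'I_N * bool *)
Definition cyc_adj (N : nat) (i j : 'I_N) : bool :=
  (val j == (val i).+1 %% N) || (val i == (val j).+1 %% N).

Definition prism_adj (N : nat) : rel ('I_N * bool) :=
  fun x y => (cyc_adj x.1 y.1 && (x.2 == y.2)) || ((x.1 == y.1) && (x.2 != y.2)).

Definition antiprism_adj (N : nat) : rel ('I_N * bool) :=
  fun x y =>
    (cyc_adj x.1 y.1 && (x.2 == y.2))
    || ((x.2 != y.2) &&
        let (a, b) := if x.2 then (y.1, x.1) else (x.1, y.1) in
        (* a is on the false-cycle, b on the true-cycle *)
        (val b == val a) || (val b == (val a).+1 %% N)).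

Definition is_prism (D V : finType) (vert : D -> V) (alpha : D -> D) : Prop :=
  exists N (f : V -> 'I_N * bool), [/\ (3 <= N)%N, bijective f &
    forall u w, madj vert alpha u w = prism_adj (f u) (f w)].

Definition is_antiprism (D V : finType) (vert : D -> V) (alpha : D -> D) : Prop :=
  exists N (f : V -> 'I_N * bool), [/\ (3 <= N)%N, bijective f &
    forall u w, madj vert alpha u w = antiprism_adj (f u) (f w)].

Definition planar_PCC (D V : finType) (vert : D -> V) (alpha sigma : D -> D) : Prop :=
  [/\ simple_plane_map vert alpha sigma,
      (forall v, (0 < curvature vert alpha sigma v)%R),
      (forall v, 3 <= mdeg vert v)%N,
      ~ is_prism vert alpha &
      ~ is_antiprism vert alpha].

(* Main.v *)
Require Import Defs.
From HB Require Import structures.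
From mathcomp Require Import all_boot all_order all_algebra.
From mathcomp Require Import zify ring lra.
Set Implicit Arguments. Unset Strict Implicit. Unset Printing Implicit Defensive.
Import Order.TTheory GRing.Theory Num.Theory.

Section Aux.
Variables (D V : finType) (vert : D -> V) (alpha sigma : D -> D).
Hypothesis halpha : forall d, alpha (alpha d) = d.
Hypothesis hsinj : injective sigma.
Hypothesis hsv : forall d, vert (sigma d) = vert d.
Hypothesis hstr : forall d d', vert d = vert d' -> fconnect sigma d d'.
Hypothesis hloop : forall d, vert (alpha d) != vert d.
Hypothesis hsimple : forall d d', vert d = vert d' -> vert (alpha d) = vert (alpha d') -> d = d'.
Hypothesis hdeg : forall v, (3 <= mdeg vert v)%N.

Local Notation phi := (face_perm alpha sigma).

Lemma phi_inj : injective phi.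
Proof.
move=> x y /hsinj h; by rewrite -(halpha x) h halpha.
Qed.

Lemma vphi x : vert (phi x) = vert (alpha x).
Proof. by rewrite /face_perm hsv. Qed.

Lemma nofix x : sigma x != x.
Proof.
apply/eqP => hx.
have : (mdeg vert (vert x) <= 1)%N.
  rewrite /mdeg -(cards1 x); apply: subset_leq_card; apply/subsetP => d.
  rewrite !inE => /eqP hd.
  have /iter_findex : fconnect sigma x d by apply: hstr.
  by rewrite iter_fix // => ->.
by have := hdeg (vert x); lia.
Qed.

Lemma A1 x : vert (phi x) != vert x.
Proof. by rewrite vphi hloop. Qed.

Lemma A2 x : vert (phi (phi x)) != vert x.
Proof.
apply/eqP => h.
have e : phi x = alpha x.
  apply: hsimple; first by rewrite vphi.
  by rewrite halpha -vphi.
move: (nofix (alpha x)); rewrite /face_perm in e; by rewrite e eqxx.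
Qed.

Lemma A3 x : phi (phi x) != alpha x.
Proof.
apply/eqP => h; move: (A1 (phi x)); by rewrite h vphi eqxx.
Qed.

Lemma len_ge3 x : (3 <= order phi x)%N.
Proof.
have h := iter_order phi_inj x.
have := order_gt0 phi x.
case: (order phi x) h => [|[|[|n]]] //= h _.
- by move: (A1 x); rewrite h eqxx.
- by move: (A2 x); rewrite h eqxx.
Qed.

Lemma order_conn x y : fconnect phi x y -> order phi y = order phi x.
Proof.
move=> hxy; apply: eq_card => z; apply/idP/idP => h.
- exact: connect_trans hxy h.
- rewrite (fconnect_sym phi_inj) in hxy; exact: connect_trans hxy h.
Qed.

End Aux.

Theorem corollary2p3 (D V : finType) (vert : D -> V) (alpha sigma : D -> D)
  (hG : planar_PCC vert alpha sigma) (v : V) (e : D)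
  (hmult : face_mult vert alpha sigma v e = 2%N) :
  (7 <= face_len alpha sigma e <= 11)%N.
Proof.
case: hG => hmap hK hdeg _ _.
case: hmap => _ [halpha [hsinj [hsv [hstr [hloop [hsimple [_ _]]]]]]].
have pinj := phi_inj halpha hsinj.
set phi := face_perm alpha sigma in pinj *.
have hS : #|[set d | (vert d == v) && fconnect phi e d]| = 2 := hmult.
have [d1] : exists d1, d1 \in [set d | (vert d == v) && fconnect phi e d].
  by apply/set0Pn; rewrite -card_gt0 hS.
rewrite inE => /andP [/eqP hd1 he1].
have conn : forall d, fconnect phi e d = fconnect phi d1 d.
  move=> d; apply/idP/idP => h.
  - by rewrite (fconnect_sym pinj) in he1; apply: connect_trans he1 h.
  - exact: connect_trans he1 h.
have hL : face_len alpha sigma e = order phi d1 := esym (order_conn halpha hsinj he1).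
rewrite hL.
have hcnt : count (fun d => vert d == v) (orbit phi d1) = 2.
  rewrite -hS -size_filter.
  have /card_uniqP <- := filter_uniq (fun d => vert d == v) (orbit_uniq phi d1).
  by apply: eq_card => d; rewrite inE mem_filter -fconnect_orbit conn.
have hit := iter_order pinj d1.
have hL3 := len_ge3 halpha hsinj hsv hstr hloop hsimple hdeg d1.
have huniq := orbit_uniq phi d1.
rewrite /orbit in hcnt huniq.
set L := order phi d1 in hcnt hit hL3 huniq *.
have F1 x : vert x = v -> (vert (phi x) == v) = false.
  by move=> hx; apply/negbTE; rewrite -hx; apply: (A1 hsv hloop).
have F2 x : vert x = v -> (vert (phi (phi x)) == v) = false.
  by move=> hx; apply/negbTE; rewrite -hx; apply: (A2 halpha hsv hstr hsimple hdeg).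
have G1 x : vert (phi x) = v -> (vert x == v) = false.
  by move=> hx; apply/negbTE; rewrite -hx eq_sym; apply: (A1 hsv hloop).
have G2 x : vert (phi (phi x)) = v -> (vert x == v) = false.
  by move=> hx; apply/negbTE; rewrite -hx eq_sym; apply: (A2 halpha hsv hstr hsimple hdeg).
have n3 : L <> 3.
  move=> h; rewrite h /= in hcnt hit.
  move: hcnt; rewrite hd1 eqxx (F1 _ hd1) (F2 _ hd1).
  by [].
have n4 : L <> 4.
  move=> h; rewrite h /= in hcnt hit.
  move: hcnt; rewrite hd1 eqxx (F1 _ hd1) (F2 _ hd1).
  by rewrite (G1 (phi (phi (phi d1)))) // hit.
have n5 : L <> 5.
  move=> h; rewrite h /= in hcnt hit.
  move: hcnt; rewrite hd1 eqxx (F1 _ hd1) (F2 _ hd1).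
  rewrite (G1 (phi (phi (phi (phi d1))))); last by rewrite hit.
  by rewrite (G2 (phi (phi (phi d1)))) // hit.
have n6 : L = 6 -> (4 <= mdeg vert v)%N.
  move=> h; rewrite h /= in hcnt hit huniq.
  move: hcnt; rewrite hd1 eqxx (F1 _ hd1) (F2 _ hd1).
  rewrite (G1 (phi (phi (phi (phi (phi d1)))))); last by rewrite hit.
  rewrite (G2 (phi (phi (phi (phi d1))))); last by rewrite hit.
  case hx3: (vert (phi (phi (phi d1))) == v) => // _; move/eqP: hx3 => hx3.
  move: huniq; rewrite /= !inE => /andP [h0 /andP [_ /andP [h2 _]]].
  set x2 := phi (phi d1) in hit hx3 h0 h2 *.
  set x3 := phi x2 in hit hx3 h0 h2 *.
  set x5 := phi (phi x3) in hit h0 h2 *.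
  set a := alpha x2; set b := alpha x5.
  have va : vert a = v by rewrite /a -(vphi alpha hsv) hx3.
  have vb : vert b = v by rewrite /b -(vphi alpha hsv x5) -/phi hit.
  have nf := nofix hstr hdeg.
  have d13 : d1 != x3 by apply: contra h0 => hh; rewrite hh !orbT.
  have d25 : x2 != x5 by apply: contra h2 => hh; rewrite hh !orbT.
  have da3 : a != x3 by apply: contra (nf a) => /eqP hh; rewrite {2}hh; apply/eqP; rewrite /x3 /phi /face_perm /a.
  have db1 : b != d1 by apply: contra (nf b) => /eqP hh; rewrite {2}hh -hit; apply/eqP; rewrite /phi /face_perm /b.
  have da1 : a != d1.
    apply: contra (A3 hsv hloop d1) => /eqP hh; by rewrite -/phi -/x2 -[x2]halpha -/a hh.
  have db3 : b != x3.
    apply: contra (A3 hsv hloop x3) => /eqP hh; by rewrite -/phi -/x5 -[x5]halpha -/b hh.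
  have dab : a != b.
    apply: contra d25 => /eqP hh; apply/eqP; by rewrite -(halpha x2) -(halpha x5) -/a -/b hh.
  have hu : uniq [:: d1; x3; a; b].
    rewrite /= !inE !negb_or d13 (eq_sym d1 a) (eq_sym d1 b) da1 db1.
    by rewrite (eq_sym x3 a) (eq_sym x3 b) da3 db3 dab.
  have := card_uniqP hu; rewrite /= => <-.
  apply: subset_leq_card; apply/subsetP => z; rewrite !inE.
  by case/or4P => /eqP ->; rewrite ?hd1 ?hx3 ?va ?vb.
set N := mdeg vert v.
have hN := hdeg v.
have c1 : #|[pred d | (vert d == v) && fconnect phi d1 d]| = 2.
  by rewrite -hS; apply: eq_card => d; rewrite !inE conn.
have c2 : #|[pred d | (vert d == v) && ~~ fconnect phi d1 d]| = (N - 2)%N.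
  have hc := cardID (fun d => fconnect phi d1 d) [pred d | vert d == v].
  have e1 (A : {pred D}) : A =i [pred d | (vert d == v) && fconnect phi d1 d] -> #|A| = 2.
    by move=> hA; rewrite (eq_card hA) c1.
  have e2 (A : {pred D}) : A =i [pred d | (vert d == v) && ~~ fconnect phi d1 d] ->
     #|A| = #|[pred d | (vert d == v) && ~~ fconnect phi d1 d]|.
    by move=> hA; rewrite (eq_card hA).
  have e3 (A : {pred D}) : A =i [pred d | vert d == v] -> #|A| = N.
    by move=> hA; rewrite (eq_card hA) /N /mdeg; apply: eq_card => d; rewrite !inE.
  rewrite (e1 [predI _ & _]) in hc; last by move=> d; rewrite !inE.
  rewrite (e2 [predD _ & _]) in hc; last by move=> d; rewrite !inE andbC.
  rewrite (e3 _) in hc; last by move=> d; rewrite !inE.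
  lia.
have hsum : (\sum_(d | vert d == v) ((face_len alpha sigma d)%:R)^-1
    <= (L%:R)^-1 *+ 2 + (3%:R)^-1 *+ (N - 2) :> rat)%R.
  rewrite (bigID (fun d => fconnect phi d1 d)) /=.
  apply: lerD.
  - rewrite (eq_bigr (fun _ => (L%:R)^-1)%R); last first.
      move=> d /andP [_ hc]; by rewrite /face_len -/phi (order_conn halpha hsinj hc).
    rewrite -c1; rewrite le_eqVlt; apply/orP; left; apply/eqP.
    exact: (sumr_const [pred d | (vert d == v) && fconnect phi d1 d] _).
  - apply: (@le_trans _ _ (\sum_(d | (vert d == v) && ~~ fconnect phi d1 d) (3%:R)^-1)%R).
      apply: ler_sum => d _.
      rewrite lef_pV2 ?posrE ?ltr0n ?ler_nat //.
      + exact: (len_ge3 halpha hsinj hsv hstr hloop hsimple hdeg).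
      + have := (len_ge3 halpha hsinj hsv hstr hloop hsimple hdeg d); rewrite /face_len; lia.
    rewrite -c2; rewrite le_eqVlt; apply/orP; left; apply/eqP.
    exact: (sumr_const [pred d | (vert d == v) && ~~ fconnect phi d1 d] _).
have hKv := hK v.
rewrite /curvature -/N in hKv.
have hprod : (L * (N - 2) < 12)%N.
  have hl : (0 < (L%:R : rat))%R by rewrite ltr0n; lia.
  have hNr : ((N%:R : rat) = (N - 2)%:R + 2)%R by rewrite -natrD subnK //; lia.
  rewrite -(ltr_nat rat) natrM.
  set l := (L%:R : rat) in hl hsum *.
  set n := ((N - 2)%:R : rat) in hNr hsum *.
  rewrite hNr in hKv.
  have h1 : (0 < 2%:R / l - n / 6%:R :> rat)%R.
    move: hKv hsum; set s := (\sum_(d | _) _)%R; rewrite -(mulr_natr (l^-1)%R 2) -(mulr_natr (3^-1)%R (N - 2)) -/n; lra.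
  have h2 : (0 < l * (2%:R / l - n / 6%:R) :> rat)%R by apply: mulr_gt0.
  have h3 : (l * (2%:R / l - n / 6%:R) = 2%:R - l * n / 6%:R :> rat)%R.
    by field; rewrite gt_eqF.
  rewrite h3 in h2; move: h2; rewrite (_ : 12%:R = 2%:R * 6%:R :> rat)%R; last by rewrite -natrM.
  lra.
have [hN3|hN4] := leqP N 3.
  have eN : N = 3 by lia.
  rewrite eN in hprod.
  have : L <> 6 by move=> h; have := n6 h; lia.
  lia.
have : (L * 2 <= L * (N - 2))%N by apply: leq_mul => //; lia.
lia.
Qed.
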